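(* Let $\varphi_1,\varphi_2:\mathbb{R}^d\to\mathbb{R}$ and suppose $x_{\varphi_1}\in\arg\min_x\varphi_1(x)$ and $x_{\varphi_2}\in\arg\min_x\varphi_2(x)$. (i) If each $\varphi_i$ admits a $\nu_{\varphi_i}$ error bound, then $$\nu_{\varphi_1}(\|x_{\varphi_1}-x_{\varphi_2}\|_2)+\nu_{\varphi_2}(\|x_{\varphi_1}-x_{\varphi_2}\|_2)\le \varphi_2(x_{\varphi_1})-\varphi_1(x_{\varphi_1})-\big(\varphi_2(x_{\varphi_2})-\varphi_1(x_{\varphi_2})\big).$$ (ii) If $\varphi_2-\varphi_1$ is differentiable and $\varphi_2$ has $\nu_{\varphi_2}$ gradient growth, then $$\nu_{\varphi_2}(\|x_{\varphi_1}-x_{\varphi_2}\|_2)\le \langle x_{\varphi_1}-x_{\varphi_2},\nabla(\varphi_2-\varphi_1)(x_{\varphi_1})\rangle .$$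
   Context: Let $\nu(r):=\inf\{s:\omega(s)\ge r\}$ be the generalized inverse of a non-decreasing function $\omega$ with $\omega(0)=0$. A function $\varphi$ admits a $\nu$ error bound if $\nu(\|x-x^*\|_2)\le\varphi(x)-\varphi(x^* )$ for $x^*=\arg\min_{x'}\varphi(x')$ and all $x\in\mathbb{R}^d$. A function $\varphi$ has $\nu$ gradient growth if $\varphi$ is subdifferentiable and $\nu(\|x-y\|_2)\le\langle y-x,u-v\rangle$ for all $x,y\in\mathbb{R}^d$ and all $u\in\partial\varphi(y)$, $v\in\partial\varphi(x)$, where $\partial$ denotes the subdifferential. *)

(* Defs.v *)
From HB Require Import structures.
From mathcomp Require Import all_boot all_order all_algebra.
From mathcomp Require Import all_classical all_reals all_analysis.
Set Implicit Arguments. Unset Strict Implicit. Unset Printing Implicit Defensive.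
Import Order.TTheory GRing.Theory Num.Theory.
Import numFieldNormedType.Exports.
Local Open Scope classical_set_scope.
Local Open Scope ring_scope.

Section Defs.
Variables (R : realType) (d : nat).

Definition dotp (u v : 'rV[R]_d) : R := \sum_(i < d) u 0 i * v 0 i.
Definition norm2 (u : 'rV[R]_d) : R := Num.sqrt (\sum_(i < d) u 0 i ^+ 2).

(* generalized inverse nu(r) = inf { s >= 0 : omega(s) >= r }, valued in \bar R
   (inf of the empty set is +oo) *)
Definition geninv (omega : R -> R) (r : R) : \bar R :=
  ereal_inf [set s%:E | s in [set s : R | 0 <= s /\ r <= omega s]].

Definition admissible (omega : R -> R) : Prop :=
  omega 0 = 0 /\ (forall s t : R, 0 <= s -> s <= t -> omega s <= omega t).

Definition is_argmin (phi : 'rV[R]_d -> R) (xs : 'rV[R]_d) : Prop :=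
  forall x, phi xs <= phi x.

Definition error_bound (nu : R -> \bar R) (phi : 'rV[R]_d -> R) : Prop :=
  forall xs, is_argmin phi xs ->
  forall x, (nu (norm2 (x - xs)) <= (phi x - phi xs)%:E)%E.

Definition subdiff (phi : 'rV[R]_d -> R) (x : 'rV[R]_d) : set 'rV[R]_d :=
  [set u | forall y, phi x + dotp u (y - x) <= phi y].

Definition subdifferentiable (phi : 'rV[R]_d -> R) : Prop :=
  forall x, subdiff phi x !=set0.

Definition gradient_growth (nu : R -> \bar R) (phi : 'rV[R]_d -> R) : Prop :=
  subdifferentiable phi /\
  forall x y u v, subdiff phi y u -> subdiff phi x v ->
    (nu (norm2 (x - y)) <= (dotp (y - x) (u - v))%:E)%E.

Definition gradient (f : 'rV[R]_d -> R) (x : 'rV[R]_d) : 'rV[R]_d :=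
  \row_(i < d) ('d f x (\row_(j < d) (i == j)%:R : 'rV[R]_d)).

End Defs.

(* Main.v *)
Require Import Defs.
From HB Require Import structures.
From mathcomp Require Import all_boot all_order all_algebra.
From mathcomp Require Import all_classical all_reals all_analysis.
From mathcomp Require Import ring lra.
Import Order.TTheory GRing.Theory Num.Theory.
Import numFieldNormedType.Exports.
Local Open Scope ring_scope.

Section Helpers.
Variables (R : realType) (d : nat).
Implicit Types (u v w : 'rV[R]_d).

Lemma norm2_sym u v : norm2 (u - v) = norm2 (v - u).
Proof.
rewrite /norm2 -opprB; congr Num.sqrt; apply: eq_bigr => i _.
by rewrite mxE sqrrN.
Qed.

Lemma dotpC u v : dotp u v = dotp v u.
Proof. by rewrite /dotp; apply: eq_bigr => i _; rewrite mulrC. Qed.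

Lemma dotpZr u (a : R) v : dotp u (a *: v) = a * dotp u v.
Proof.
rewrite /dotp mulr_sumr; apply: eq_bigr => i _.
by rewrite mxE mulrCA.
Qed.

Lemma dotp0l v : dotp 0 v = 0.
Proof. by rewrite /dotp big1 // => i _; rewrite mxE mul0r. Qed.

Lemma diff_dotp (h : 'rV[R]_d -> R) x w :
  'd h x w = dotp w (gradient h x).
Proof.
have -> : w = \sum_(i < d) w 0 i *: (\row_(j < d) (i == j)%:R : 'rV[R]_d).
  apply/rowP => j; rewrite summxE (bigD1 j) //= big1.
    by rewrite !mxE eqxx mulr1 addr0.
  by move=> i /negbTE ij; rewrite !mxE ij mulr0.
rewrite linear_sum /dotp; apply: eq_bigr => i _.
rewrite linearZ /= mxE; congr (_ * _).
by rewrite summxE (bigD1 i) //= big1 ?mxE ?eqxx ?mulr1 ?addr0 // => k /negbTE ki; rewrite !mxE ki mulr0.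
Qed.


Lemma subdiff_convex (phi : 'rV[R]_d -> R) x y (t : R) :
  subdifferentiable phi -> 0 <= t <= 1 ->
  phi (x + t *: (y - x)) <= (1 - t) * phi x + t * phi y.
Proof.
move=> sd /andP[t0 t1]; set z := x + t *: (y - x).
have [v hv] := sd z.
have h1 := hv x; have h2 := hv y.
have e1 : x - z = (- t) *: (y - x) by rewrite /z opprD addrA subrr add0r scaleNr.
have e2 : y - z = (1 - t) *: (y - x).
  by rewrite /z scalerBl scale1r opprD addrA.
rewrite e1 dotpZr in h1; rewrite e2 dotpZr in h2.
set D := dotp v (y - x) in h1 h2.
have a1 : 0 <= 1 - t by rewrite subr_ge0.
have := ler_wpM2l a1 h1; have := ler_wpM2l t0 h2.
move=> b2 b1.
have : (1 - t) * (phi z + - t * D) + t * (phi z + (1 - t) * D) <= (1 - t) * phi x + t * phi y.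
  exact: lerD.
suff -> : (1 - t) * (phi z + - t * D) + t * (phi z + (1 - t) * D) = phi z by [].
by ring.
Qed.

End Helpers.

Theorem lemma1 (R : realType) (d : nat) (phi1 phi2 : 'rV[R]_d -> R)
  (x1 x2 : 'rV[R]_d) (omega1 omega2 : R -> R) :
  admissible omega1 -> admissible omega2 ->
  is_argmin phi1 x1 -> is_argmin phi2 x2 ->
  (error_bound (geninv omega1) phi1 -> error_bound (geninv omega2) phi2 ->
     (geninv omega1 (norm2 (x1 - x2)) + geninv omega2 (norm2 (x1 - x2))
       <= (phi2 x1 - phi1 x1 - (phi2 x2 - phi1 x2))%:E)%E)
  /\
  ((forall x, differentiable (phi2 \- phi1) x) ->
   gradient_growth (geninv omega2) phi2 ->
     (geninv omega2 (norm2 (x1 - x2))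
       <= (dotp (x1 - x2) (gradient (phi2 \- phi1) x1))%:E)%E).
Proof.
move=> _ _ m1 m2; split.
  move=> eb1 eb2.
  have h1 := eb1 x1 m1 x2; have h2 := eb2 x2 m2 x1.
  rewrite norm2_sym in h1.
  have := leeD h1 h2.
  suff -> : ((phi1 x2 - phi1 x1)%:E + (phi2 x1 - phi2 x2)%:E)%E
     = (phi2 x1 - phi1 x1 - (phi2 x2 - phi1 x2))%:E by [].
  by rewrite -EFinD; congr EFin; ring.
move=> dh [sd gg].
set h := phi2 \- phi1.
set g := gradient h x1.
have g_sub : subdiff phi2 x1 g.
  move=> y; rewrite dotpC -diff_dotp -deriveE //.
  set w := y - x1.
  have df : derivable h x1 w by apply: diff_derivable.
  have cv := cvg_dnbhs_at_right df.
  suff key : ('D_w h x1 : R) <= phi2 y - phi2 x1 by move: key; rewrite lerBrDl.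
  apply: (cvgr_to_le cv).
  near=> t.
  have t0 : 0 < t by near: t; exact: nbhs_right_gt.
  have t1 : t < 1 by near: t; exact: nbhs_right_lt.
  rewrite /= ler_pdivrMl //.
  have c := @subdiff_convex R d phi2 x1 y t sd.
  rewrite ltW // ltW // in c.
  have := c isT; rewrite -/w => c'.
  have := m1 (t *: w + x1).
  rewrite /h /= addrC.
  move=> p1.
  have : phi2 (x1 + t *: w) - phi2 x1 <= t * (phi2 y - phi2 x1).
    by rewrite lerBlDr; apply: le_trans c' _; rewrite le_eqVlt; apply/orP; left; apply/eqP; ring.
  by move=> p2; apply: le_trans p2; lra.
have z_sub : subdiff phi2 x2 0.
  by move=> y; rewrite dotp0l addr0; exact: m2.
have := gg x2 x1 g 0 g_sub z_sub.
by rewrite subr0 norm2_sym.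
Unshelve. all: by end_near.
Qed.
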